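(* For any integers $q\ge 2$ and positive integers $w\le n$, there exists a $\mathrm{TOC}_q(n,2w,w)$ if and only if $\lfloor n/w\rfloor$ divides $(q-1)^w\binom{n}{w}$.
   Context: $\mathcal{H}_q(n,w)$ is the set of all words of length $n$ over $\mathbb{Z}_q$ with exactly $w$ nonzero entries, with the Hamming distance. An $(n,d,w)_q$-code is a nonempty subset of $\mathcal{H}_q(n,w)$ in which any two distinct words have Hamming distance at least $d$; $A_q(n,d,w)$ is the maximum size of such a code and a code of this size is optimal. A $\mathrm{TOC}_q(n,d,w)$ (tiling) is a partition of $\mathcal{H}_q(n,w)$ into mutually disjoint optimal $(n,d,w)_q$-codes. *)

(* Defs.v *)
From mathcomp Require Import all_boot.
Set Implicit Arguments. Unset Strict Implicit. Unset Printing Implicit Defensive.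

(* Words of length n over Z_q, represented as functions 'I_n -> 'I_q
   (the symbols 0,...,q-1 of Z_q; 0 is the symbol with value 0). *)
Definition word (q n : nat) := {ffun 'I_n -> 'I_q}.

Definition wt (q n : nat) (x : word q n) : nat := #|[set i | val (x i) != 0]|.

Definition hdist (q n : nat) (x y : word q n) : nat := #|[set i | x i != y i]|.

Definition Hqnw (q n w : nat) : {set word q n} := [set x | wt x == w].

Definition is_code (q n d w : nat) (C : {set word q n}) : bool :=
  [&& C \subset Hqnw q n w, C != set0 &
      [forall x in C, forall y in C, (x != y) ==> (d <= hdist x y)]].

Definition Aq (q n d w : nat) : nat :=
  \max_(C : {set word q n} | is_code d w C) #|C|.

Definition optimal_code (q n d w : nat) (C : {set word q n}) : bool :=
  is_code d w C && (#|C| == Aq q n d w).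

Definition is_TOC (q n d w : nat) (P : {set {set word q n}}) : bool :=
  partition P (Hqnw q n w) && [forall C in P, optimal_code d w C].

Definition TOC_exists (q n d w : nat) : Prop :=
  exists P : {set {set word q n}}, is_TOC d w P.

(* Main.v *)
Require Import Defs.
From mathcomp Require Import all_boot.
From mathcomp Require Import zify.
Set Implicit Arguments. Unset Strict Implicit. Unset Printing Implicit Defensive.

Section HallS.
Variables (TL TR : finType) (E : TL -> TR -> bool).

Definition nbh (X : {set TL}) : {set TR} := [set r | [exists l in X, E l r]].

Lemma nbhU X Y : nbh (X :|: Y) = nbh X :|: nbh Y.
Proof.
apply/setP => r; rewrite !inE; apply/existsP/orP.
- by case=> l /andP[]; rewrite inE => /orP[] lX Elr; [left|right];
     apply/existsP; exists l; rewrite lX.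
- by case=> /existsP[l /andP[lX Elr]]; exists l; rewrite inE lX ?orbT.
Qed.

Lemma sum_nbhU (d : TR -> nat) X Y :
  \sum_(r in nbh (X :|: Y)) d r =
  \sum_(r in nbh X) d r + \sum_(r in nbh Y) (if r \in nbh X then 0 else d r).
Proof.
rewrite nbhU (big_setID (nbh X)) setUK setDUl setDv set0U.
congr (_ + _).
rewrite [RHS](big_setID (nbh X)) /= [X in X + _]big1 ?add0n; last first.
  by move=> r; rewrite in_setI => /andP[_ ->].
by apply: eq_bigr => r; rewrite in_setD => /andP[/negbTE -> _].
Qed.

Lemma hall (r0 : TR) (A : {set TL}) (d : TR -> nat) :
  (forall X : {set TL}, X \subset A -> #|X| <= \sum_(r in nbh X) d r) ->
  exists g : TL -> TR, (forall l, l \in A -> E l (g l)) /\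
                       (forall r, #|[set l in A | g l == r]| <= d r).
Proof.
have [n] := ubnP #|A|; elim: n A d => // n IH A d ltAn hallA.
case: (set_0Vmem A) => [-> | [l0 l0A]].
  exists (fun _ => r0); split => [l|r]; first by rewrite inE.
  suff -> : [set l in set0 | r0 == r] = set0 :> {set TL} by rewrite cards0.
  by apply/setP => l; rewrite !inE.
case: (boolP [exists X : {set TL}, [&& X \proper A, X != set0 &
                  #|X| == \sum_(r in nbh X) d r]]).
- case/existsP => X /and3P [pXA nX0 /eqP eqX].
  have sXA := proper_sub pXA.
  have [g1 [E1 c1]] := IH X d (leq_trans (proper_card pXA) ltAn)
                          (fun Y sYX => hallA Y (subset_trans sYX sXA)).
  pose d2 r := if r \in nbh X then 0 else d r.
  have X0 : 0 < #|X| by rewrite card_gt0.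
  have [g2 [E2 c2]] : exists g : TL -> TR, (forall l, l \in A :\: X -> E l (g l)) /\
                       (forall r, #|[set l in A :\: X | g l == r]| <= d2 r).
    apply: IH.
      rewrite cardsD (setIidPr sXA); move: ltAn (subset_leq_card sXA); lia.
    move=> Y sY.
    have sYA : Y \subset A by apply: subset_trans sY (subsetDl _ _).
    have dXY : [disjoint X & Y].
      rewrite -setI_eq0; apply/eqP/setP => l; rewrite !inE.
      apply/negbTE/negP => /andP[lX lY]; move/subsetP: sY => /(_ _ lY).
      by rewrite inE lX.
    have := hallA (X :|: Y) ltac:(by rewrite subUset sXA sYA).
    rewrite sum_nbhU -eqX cardsU.
    move: dXY; rewrite -setI_eq0 => /eqP ->; rewrite cards0 subn0.
    by rewrite leq_add2l.
  exists (fun l => if l \in X then g1 l else g2 l); split.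
    move=> l lA; case: ifP => lX; first exact: E1.
    by apply: E2; rewrite inE lX.
  move=> r.
  have sub : [set l in A | (if l \in X then g1 l else g2 l) == r] \subset
             [set l in X | g1 l == r] :|: [set l in A :\: X | g2 l == r].
    apply/subsetP => l; rewrite !inE; case: ifP => lX /andP[lA e].
      by rewrite e.
    by rewrite lA e orbT.
  apply: leq_trans (subset_leq_card sub) _.
  apply: leq_trans (leq_card_setU _ _) _.
  case: (boolP (r \in nbh X)) => rN.
    by move: (c2 r); rewrite /d2 rN leqn0 => /eqP ->; rewrite addn0.
  suff -> : [set l in X | g1 l == r] = set0.
    by rewrite cards0 add0n; move: (c2 r); rewrite /d2 (negbTE rN).
  apply/setP => l; rewrite !inE; apply/negbTE/negP => /andP[lX /eqP e].
  move: rN; rewrite inE => /existsP; apply; exists l; rewrite lX -e.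
  by apply: E1.
- move=> ntight.
  have strict : forall X : {set TL}, X \proper A -> X != set0 -> #|X| < \sum_(r in nbh X) d r.
    move=> X pXA nX0; rewrite ltn_neqAle hallA ?proper_sub // andbT.
    apply/negP => e; move/negP: ntight; apply; apply/existsP; exists X.
    by rewrite pXA nX0 e.
  have h1 := hallA [set l0]; rewrite sub1set l0A cards1 in h1.
  have [r1 r1P] : exists r1, (r1 \in nbh [set l0]) && (0 < d r1).
    case: (pickP [pred r | (r \in nbh [set l0]) && (0 < d r)]) => [r1 Pr1|none].
      by exists r1.
    move: (h1 isT); rewrite big1 // => r rN; move: (none r) => /=.
    by rewrite rN /=; case: (d r).
  case/andP: r1P => r1N dr1.
  have El0 : E l0 r1.
    by move: r1N; rewrite inE => /existsP[l /andP[]]; rewrite inE => /eqP ->.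
  pose d' r := if r == r1 then (d r).-1 else d r.
  have sumd' : forall S : {set TR}, \sum_(r in S) d r <= \sum_(r in S) d' r + 1.
    move=> S; case: (boolP (r1 \in S)) => r1S.
      rewrite (bigD1 r1 r1S) (bigD1 r1 r1S) /= /d' eqxx.
      have -> : \sum_(i | (i \in S) && (i != r1)) d' i = \sum_(i | (i \in S) && (i != r1)) d i.
        by apply: eq_bigr => r /andP[_ /negbTE]; rewrite /d' => ->.
      by rewrite (eq_bigl (fun i => (i \in S) && (i != r1))) //; lia.
    have -> : \sum_(r in S) d' r = \sum_(r in S) d r.
      apply: eq_bigr => r rS; rewrite /d'; case: eqP => // e.
      by move: r1S; rewrite -e rS.
    exact: leq_addr.
  have [g' [E' c']] : exists g : TL -> TR, (forall l, l \in A :\ l0 -> E l (g l)) /\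
                       (forall r, #|[set l in A :\ l0 | g l == r]| <= d' r).
    apply: IH.
      by move: ltAn; rewrite (cardsD1 l0 A) l0A.
    move=> Y sY; case: (set_0Vmem Y) => [-> | [y yY]]; first by rewrite cards0.
    have pYA : Y \proper A.
      apply/properP; split; first by apply: subset_trans sY (subsetDl _ _).
      exists l0 => //; apply/negP => l0Y; move/subsetP: sY => /(_ _ l0Y).
      by rewrite !inE eqxx.
    have nY0 : Y != set0 by apply/set0Pn; exists y.
    have := strict Y pYA nY0; have := sumd' (nbh Y); lia.
  exists (fun l => if l == l0 then r1 else g' l); split.
    move=> l lA; case: eqP => [-> //|/eqP ne]; apply: E'.
    by rewrite !inE ne.
  move=> r.
  have sub : [set l in A | (if l == l0 then r1 else g' l) == r] \subset
             (if r == r1 then [set l0] else set0) :|: [set l in A :\ l0 | g' l == r].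
    apply/subsetP => l; rewrite inE; case: (l =P l0) => [-> /andP[_ /eqP <-]|/eqP ne /andP[lA e]].
      by rewrite eqxx !inE eqxx.
    by rewrite !inE ne lA e orbT.
  apply: leq_trans (subset_leq_card sub) _.
  apply: leq_trans (leq_card_setU _ _) _.
  move: (c' r); rewrite /d'; case: eqP => [->|_]; last by rewrite cards0.
  rewrite cards1; move: dr1; lia.
Qed.

End HallS.

Lemma sum_le_eq (T : finType) (a b : T -> nat) :
  (forall r, a r <= b r) -> \sum_r a r = \sum_r b r -> forall r, a r = b r.
Proof.
move=> le e r; apply/eqP; rewrite eqn_leq le /= leqNgt; apply/negP => lt.
move: e; rewrite (bigD1 r) // [RHS](bigD1 r) //=.
have := @leq_sum _ (index_enum T) (fun i => i != r) a b (fun i _ => le i).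
lia.
Qed.

Lemma sum_sub_le (T : finType) (X A : {set T}) (F : T -> nat) :
  X \subset A -> \sum_(l in X) F l <= \sum_(l in A) F l.
Proof.
move=> sXA; rewrite [X in _ <= X](big_setID X) (setIidPr sXA); exact: leq_addr.
Qed.

Lemma card_fibers (TL TR : finType) (A : {set TL}) (g : TL -> TR) :
  \sum_r #|[set l in A | g l == r]| = #|A|.
Proof.
rewrite -sum1_card (partition_big g predT) //=.
apply: eq_bigr => r _; rewrite -sum1_card; apply: eq_bigl => l.
by rewrite inE.
Qed.

Lemma frac_match (TL TR : finType) (A : {set TL}) (f : TL -> TR -> nat)
  (D : nat) (r0 : TR) (d : TR -> nat) :
  0 < D ->
  (forall l, l \in A -> \sum_r f l r = D) ->
  (forall r, r != r0 -> \sum_(l in A) f l r = D * d r) ->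
  exists g : TL -> TR, (forall l, l \in A -> 0 < f l (g l)) /\
    (forall r, r != r0 -> #|[set l in A | g l == r]| = d r).
Proof.
move=> D0 rows cols.
have tot : \sum_r \sum_(l in A) f l r = #|A| * D.
  by rewrite exchange_big /= (eq_bigr (fun _ => D)) ?sum_nat_const.
pose s := \sum_(r | r != r0) d r.
have sd : D * s + \sum_(l in A) f l r0 = #|A| * D.
  rewrite -tot [RHS](bigD1 r0) //= addnC big_distrr /=; congr (_ + _).
  by apply: eq_bigr => r /cols ->.
have sA : s <= #|A|.
  by rewrite -(leq_pmul2l D0); move: sd; lia.
pose d' r := if r == r0 then #|A| - s else d r.
have capc : forall r, \sum_(l in A) f l r <= D * d' r.
  move=> r; rewrite /d'; case: eqP => [->|/eqP ne]; last by rewrite cols.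
  rewrite mulnBr; move: sd; lia.
have hc : forall X : {set TL}, X \subset A ->
    #|X| <= \sum_(r in nbh (fun l r => 0 < f l r) X) d' r.
  move=> X sXA.
  rewrite -(leq_pmul2l D0) big_distrr /=.
  have e1 : D * #|X| = \sum_(l in X) \sum_(r in nbh (fun l r => 0 < f l r) X) f l r.
    rewrite mulnC -sum_nat_const; apply: eq_bigr => l lX.
    rewrite -(rows l (subsetP sXA l lX)) [LHS](bigID (mem (nbh (fun l r => 0 < f l r) X))) /=.
    rewrite [X in _ + X = _]big1 ?addn0 // => r rN.
    apply/eqP; rewrite eqn0Ngt; apply/negP => fp; move: rN; rewrite inE.
    by move/negP; apply; apply/existsP; exists l; rewrite lX.
  rewrite e1 exchange_big /=; apply: leq_sum => r _.
  apply: leq_trans (capc r); exact: sum_sub_le.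

have [g [Eg cg]] := @hall _ _ (fun l r => 0 < f l r) r0 A d' hc.
exists g; split => // r ne.
have := @sum_le_eq _ _ d' cg; rewrite card_fibers.
move=> /(_ _ r); rewrite /d' (negbTE ne); apply.
rewrite (bigD1 r0) //= eqxx (eq_bigr d) => [|i /negbTE ->//].
by rewrite -/s subnK.
Qed.

Lemma big_optionE (T : finType) (F : option T -> nat) :
  \sum_o F o = F None + \sum_x F (Some x).
Proof.
rewrite (bigD1 None) //=; congr (_ + _).
rewrite (reindex_omap Some id); last by case.
by apply: eq_bigl => x; rewrite eqxx.
Qed.

Lemma sum_by_value (I T : finType) (F : I -> T) (h : T -> nat) :
  \sum_i h (F i) = \sum_S #|[set i | F i == S]| * h S.
Proof.
rewrite (partition_big F predT) //; apply: eq_bigr => S _.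
rewrite (eq_bigr (fun _ => h S)) => [|i /andP[_ /eqP -> //]].
rewrite (eq_bigl (mem [set i | F i == S])) ?sum_nat_const // => i.
by rewrite !inE.
Qed.

Lemma sum_bool_card (I : finType) (P : pred I) :
  \sum_i (P i : nat) = #|[set i | P i]|.
Proof.
rewrite -sum1_card [RHS]big_mkcond /=; apply: eq_bigr => i _.
by rewrite inE; case: (P i).
Qed.

Lemma card_split (I T : finType) (h : I -> T) (j0 : I) (v : T) :
  #|[set j | h j == v]| = (h j0 == v) + #|[set j | (j != j0) && (h j == v)]|.
Proof.
rewrite (cardsD1 j0) inE; congr (_ + _); apply: eq_card => j; rewrite !inE.
by [].
Qed.

Lemma sum_setT (I : finType) (F : I -> nat) : \sum_(i in [set: I]) F i = \sum_i F i.
Proof. by apply: eq_bigl => i; rewrite in_setT. Qed.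

Section BarS.
Variables (n w m lam t : nat).
Hypothesis hmw : m * w <= n.
Hypothesis ht : t * m = lam * 'C(n, w).

Definition ltl (l : nat) : {set 'I_n} := [set x : 'I_n | x < l].
Definition cnt (F : 'I_t -> 'I_m -> {set 'I_n}) i S := #|[set j | F i j == S]|.
Definition target l (S : {set 'I_n}) :=
  if (S \subset ltl l) && (#|S| <= w) then lam * 'C(n - l, w - #|S|) else 0.

Definition inv l (F : 'I_t -> 'I_m -> {set 'I_n}) :=
  [/\ (forall i j, F i j \subset ltl l),
      (forall i j j', j != j' -> [disjoint F i j & F i j']),
      (forall i j, #|F i j| <= w),
      (forall i, l <= \sum_j #|F i j| + (n - m * w)) &
      (forall S, \sum_i cnt F i S = target l S)].

Lemma ltl0 : ltl 0 = set0.
Proof. by apply/setP => y; rewrite !inE. Qed.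

Lemma inv0 : inv 0 (fun _ _ => set0).
Proof.
split => //.
- by move=> *; rewrite -setI_eq0 set0I.
- by move=> *; rewrite cards0.
move=> S; rewrite /target ltl0 subset0 /cnt.
case: (S =P set0) => [->|/eqP ne] /=.
  rewrite cards0 leq0n subn0 subn0 -ht.
  rewrite (eq_bigr (fun _ => m)) ?sum_nat_const ?card_ord // => i _.
  by rewrite -[RHS]card_ord -cardsT; apply: eq_card => j; rewrite !inE eqxx.
apply: big1 => i _; apply/eqP; rewrite cards_eq0; apply/eqP/setP => j.
by rewrite !inE eq_sym (negbTE ne).
Qed.


Lemma ltl_sub l : ltl l \subset ltl l.+1.
Proof. by apply/subsetP => y; rewrite !inE => /leqW. Qed.

Lemma step l F : l < n -> inv l F -> exists F', inv l.+1 F'.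
Proof.
move=> ltln [I1 I2 I3 I4 I5].
set D := n - l.
have D0 : 0 < D by rewrite subn_gt0.
set r := n - m * w.
pose x : 'I_n := Ordinal ltln.
have xF : forall i j, x \notin F i j.
  by move=> i j; apply/negP => /(subsetP (I1 i j)); rewrite inE ltnn.
pose c i := \sum_j #|F i j|.
have cle : forall i, c i <= m * w.
  move=> i; rewrite /c; apply: (@leq_trans (\sum_(j < m) w)); first exact: leq_sum (fun j _ => I3 i j).
  by rewrite sum_nat_const card_ord.
pose f i (o : option {set 'I_n}) :=
  if o is Some Z then cnt F i Z * (w - #|Z|) else c i + r - l.
pose d (o : option {set 'I_n}) :=
  if o is Some Z then
    (if (Z \subset ltl l) && (#|Z| < w) then lam * 'C(D.-1, (w - #|Z|).-1) else 0)
  else 0.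
have rows : forall i, i \in [set: 'I_t] -> \sum_o f i o = D.
  move=> i _; rewrite big_optionE /=.
  rewrite /cnt -(sum_by_value (F i) (fun Z => w - #|Z|)).
  rewrite sumnB => [|j _]; last exact: I3.
  rewrite sum_nat_const card_ord -/(c i).
  have := cle i; have := I4 i; rewrite -/(c i) /D /r.
  have := hmw; have := ltln; set mw := m * w; lia.
have cols : forall o, o != None -> \sum_(i in [set: 'I_t]) f i o = D * d o.
  case=> // Z _ /=.
  rewrite -big_distrl /= sum_setT I5 /target.
  case: (Z \subset ltl l) => /=; last by rewrite muln0.
  case: (ltngtP #|Z| w) => hS /=.
  - have k1 : w - #|Z| = (w - #|Z|).-1.+1 by rewrite prednK // subn_gt0.
    set k := (w - #|Z|).-1 in k1 *; rewrite k1 mulnCA mul_bin_diag.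
    by rewrite [k.+1 * _]mulnC mulnA.
  - by rewrite muln0.
  - by rewrite hS subnn muln0 muln0.
have [g [gpos gcnt]] := @frac_match _ _ [set: 'I_t] f D None d D0 rows cols.
have gcnt' : forall Z, #|[set i | g i == Some Z]| = d (Some Z).
  move=> Z; rewrite -(gcnt (Some Z)) //; apply: eq_card => i; rewrite !inE.
  by [].
have gS : forall i Z, g i = Some Z -> exists2 j0, F i j0 = Z & #|Z| < w.
  move=> i Z e; have := gpos i (in_setT i); rewrite e /= muln_gt0 => /andP[cp wp].
  move: cp; rewrite /cnt card_gt0 => /set0Pn[j0]; rewrite inE => /eqP Fj0.
  by exists j0 => //; rewrite -subn_gt0.
have gN : forall i, g i = None -> l < c i + r.
  by move=> i e; have := gpos i (in_setT i); rewrite e /=; lia.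
pose sel i : option 'I_m := if g i is Some Z then [pick j | F i j == Z] else None.
have selS : forall i Z, g i = Some Z ->
    exists j0, [/\ sel i = Some j0, F i j0 = Z & #|Z| < w].
  move=> i Z e; have [j1 Fj1 lt] := gS i Z e.
  rewrite /sel e; case: pickP => [j0 /eqP Fj0 | none].
    by exists j0.
  by move: (none j1); rewrite Fj1 eqxx.
have selN : forall i, g i = None -> sel i = None.
  by move=> i e; rewrite /sel e.
pose F' i j := if sel i == Some j then x |: F i j else F i j.
have memF' : forall i k y,
    (y \in F' i k) = ((y == x) && (sel i == Some k)) || (y \in F i k).
  by move=> i k y; rewrite /F'; case: (sel i == Some k); rewrite ?in_setU1 ?andbT ?andbF.
have cntx : forall i (Z' : {set 'I_n}), x \in Z' -> cnt F i Z' = 0.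
  move=> i Z' xS'; apply/eqP; rewrite cards_eq0; apply/eqP/setP => j.
  rewrite !inE; apply/negbTE/negP => /eqP e'.
  by move: (xF i j); rewrite e' xS'.
have cntF' : forall i (Z' : {set 'I_n}), cnt F' i Z' =
    if x \in Z' then nat_of_bool (g i == Some (Z' :\ x)) else cnt F i Z' - (g i == Some Z').
  move=> i Z'; case e: (g i) => [Z|].
    have [j0 [s0 F0 lt]] := selS i Z e.
    have xS : x \notin Z by rewrite -F0.
    rewrite /cnt (card_split (F' i) j0 Z') (card_split (F i) j0 Z').
    have rest : [set j | (j != j0) && (F' i j == Z')] =
                [set j | (j != j0) && (F i j == Z')].
      apply/setP => j; rewrite !inE /F' s0.
      case: (j =P j0) => [->|/eqP ne] //=.
      have ne' : j0 != j by rewrite eq_sym.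
      by rewrite (inj_eq Some_inj) (negbTE ne').
    rewrite rest /F' s0 eqxx F0 (inj_eq Some_inj).
    case: ifP => xS'.
      have -> : #|[set j | (j != j0) && (F i j == Z')]| = 0.
        apply/eqP; rewrite cards_eq0; apply/eqP/setP => j; rewrite !inE.
        apply/negbTE/negP => /andP[_ /eqP e'].
        by move: (xF i j); rewrite e' xS'.
      rewrite addn0; congr (nat_of_bool _).
      apply/eqP/eqP => [<-|->]; first by rewrite setU1K.
      by rewrite setD1K.
    have -> : (x |: Z == Z') = false.
      by apply/negbTE/negP => /eqP e'; move: xS'; rewrite -e' setU11.
    by rewrite (inj_eq Some_inj); case: (Z == Z'); rewrite /= ?add0n ?subn0 // addKn.
  have eF : forall j, F' i j = F i j by move=> j; rewrite /F' (selN i e).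
  have -> : cnt F' i Z' = cnt F i Z'.
    by rewrite /cnt; apply: eq_card => j; rewrite !inE eF.
  case: ifP => xS' /=; last by rewrite subn0.
  exact: cntx.
exists F'; split.
- move=> i j; rewrite /F'; have sub := subset_trans (I1 i j) (ltl_sub l).
  case: ifP => _ //; rewrite subUset sub andbT sub1set inE /=.
  exact: ltnSn.
- move=> i j j' ne; rewrite -setI_eq0; apply/eqP/setP => y.
  rewrite in_set0 in_setI; apply/negbTE/negP => /andP[].
  rewrite !memF'; case: (y =P x) => [->|_] /=.
    rewrite (negbTE (xF i j)) (negbTE (xF i j')) !orbF => /eqP -> /eqP.
    by move=> [] e'; move: ne; rewrite e' eqxx.
  move=> yj yj'; have := I2 i j j' ne; rewrite -setI_eq0 => /eqP/setP/(_ y).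
  by rewrite !inE yj yj'.
- move=> i j; rewrite /F'; case: eqP => [es|_]; last exact: I3.
  case e: (g i) => [Z|]; last by move: es; rewrite selN.
  have [j0 [s0 F0 lt]] := selS i Z e.
  move: es; rewrite s0 => -[ej]; subst j0.
  rewrite cardsU1 F0; move: lt; case: (x \notin Z) => /=; lia.
- move=> i; case e: (g i) => [Z|].
    have [j0 [s0 F0 lt]] := selS i Z e.
    have -> : \sum_j #|F' i j| = (c i).+1.
      rewrite /c (bigD1 j0) //= [in RHS](bigD1 j0) //= /F' s0 eqxx cardsU1 (xF i j0).
      rewrite add1n addSn; congr (_.+1); congr (_ + _); apply: eq_bigr => j ne.
      by rewrite (inj_eq Some_inj) eq_sym (negbTE ne).
    have := I4 i; rewrite -/(c i) -/r; lia.
  have -> : \sum_j #|F' i j| = c i.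
    by apply: eq_bigr => j _; rewrite /F' selN.
  by have := gN i e.
move=> Z'; rewrite (eq_bigr _ (fun i _ => cntF' i Z')).
case: (boolP (x \in Z')) => xS'.
  rewrite (sum_bool_card (fun i => g i == Some (Z' :\ x))) gcnt' /= /target.
  have cS' : #|Z'| = #|Z' :\ x|.+1 by rewrite (cardsD1 x Z') xS'.
  have sub : (Z' \subset ltl l.+1) = (Z' :\ x \subset ltl l).
    apply/subsetP/subsetP => h y.
      rewrite !inE => /andP[yx yS]; have := h y yS; rewrite !inE ltnS leq_eqVlt.
      case/orP => // /eqP e'; move: yx; suff -> : y = x by rewrite eqxx.
      by apply: val_inj; rewrite /= e'.
    move=> yS; case: (y =P x) => [->|/eqP yx]; first by rewrite inE /=.
    have := h y; rewrite !inE yx yS => /(_ isT) /ltnW.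
    by [].
  rewrite sub cS' subnS /D -subnS; congr (if _ then _ else _).
  by rewrite [w - _.+1]subnS.
rewrite sumnB => [|i _]; last first.
  case e: (g i) => [Z|] //=.
  have [j0 [s0 F0 lt]] := selS i Z e.
  rewrite (inj_eq Some_inj); case: (Z =P Z') => [<-|] //=.
  rewrite /cnt card_gt0; apply/set0Pn; exists j0.
  by rewrite inE F0.
rewrite I5 (sum_bool_card (fun i => g i == Some Z')) gcnt' /= /target.
have sub : (Z' \subset ltl l.+1) = (Z' \subset ltl l).
  apply/subsetP/subsetP => h y yS; last by have := h y yS; rewrite !inE => /leqW.
  have := h y yS; rewrite !inE ltnS leq_eqVlt => /orP[/eqP e'|//].
  suff yx : y = x by move: xS'; rewrite -yx yS.
  by apply: val_inj; rewrite /= e'.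
rewrite sub; case: (Z' \subset ltl l) => /=; last by [].
case: (ltngtP #|Z'| w) => hS /=.
- have k1 : w - #|Z'| = (w - #|Z'|).-1.+1 by rewrite prednK // subn_gt0.
  set k := (w - #|Z'|).-1 in k1 *; rewrite k1 subnS -/D -{1}(prednK D0) binS.
  by rewrite mulnDr addnK.
- by rewrite subn0.
- by rewrite hS subnn !bin0 subn0.
Qed.

Lemma inv_all l : l <= n -> exists F, inv l F.
Proof.
elim: l => [|l IH] ln; first by exists (fun _ _ => set0); exact: inv0.
have [F iF] := IH (ltnW ln); exact: step ln iF.
Qed.

Lemma baranyai_sec : exists F : 'I_t -> 'I_m -> {set 'I_n},
  [/\ (forall i j, #|F i j| = w),
      (forall i j j', j != j' -> [disjoint F i j & F i j']) &
      (forall S : {set 'I_n}, #|S| = w -> \sum_i cnt F i S = lam)].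
Proof.
have [F [I1 I2 I3 I4 I5]] := inv_all (leqnn n).
have subn : forall S : {set 'I_n}, S \subset ltl n.
  by move=> S; apply/subsetP => y _; rewrite inE ltn_ord.
exists F; split => //.
  move=> i j; apply/eqP; rewrite eqn_leq I3 /= leqNgt; apply/negP => lt.
  have := I5 (F i j); rewrite /target subn (ltnW lt) subnn /=.
  rewrite -{1}(prednK (_ : 0 < w - #|F i j|)) ?subn_gt0 // bin0n muln0.
  move/eqP; rewrite sum_nat_eq0 => /forallP /(_ i) /=.
  rewrite /cnt cards_eq0 => /eqP/setP/(_ j); rewrite !inE eqxx.
  by [].
move=> S cS; by rewrite I5 /target subn cS leqnn !subnn /= bin0 muln1.
Qed.

End BarS.

Lemma fam_card (n q : nat) (F : 'I_n -> pred 'I_q) :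
  #|[set x : {ffun 'I_n -> 'I_q} | [forall i, x i \in F i]]| = \prod_i #|F i|.
Proof.
have := @card_family 'I_n (fun _ => 'I_q) F.
rewrite foldrE big_map big_enum /= => <-.
apply: eq_card => x; rewrite inE; apply/forallP/familyP => h i; exact: h.
Qed.

Section CodeS.
Variables (q n : nat).
Hypothesis q1 : 1 < q.

Definition supp (x : word q n) : {set 'I_n} := [set i | val (x i) != 0].

Lemma diff_sub (x y : word q n) : [set i | x i != y i] \subset supp x :|: supp y.
Proof.
apply/subsetP => i; rewrite !inE; apply: contraR; rewrite negb_or !negbK.
by move=> /andP[/eqP a /eqP b]; apply/eqP/val_inj; rewrite a b.
Qed.

Lemma hdist_disj (x y : word q n) : [disjoint supp x & supp y] ->
  hdist x y = #|supp x| + #|supp y|.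
Proof.
move=> dj; rewrite /hdist.
have -> : [set i | x i != y i] = supp x :|: supp y.
  apply/eqP; rewrite eqEsubset diff_sub /=; apply/subsetP => i; rewrite !inE.
  case/orP => [xi|yi].
    have := disjointFr dj (_ : i \in supp x); rewrite !inE xi => /(_ isT).
    by move/negbFE => /eqP y0; apply/eqP => e; move: xi; rewrite e y0.
  have := disjointFl dj (_ : i \in supp y); rewrite !inE yi => /(_ isT).
  by move/negbFE => /eqP x0; apply/eqP => e; move: yi; rewrite -e x0.
rewrite cardsU; move: dj; rewrite -setI_eq0 => /eqP ->.
by rewrite cards0 subn0.
Qed.

Lemma far_disj w (x y : word q n) : wt x = w -> wt y = w -> 2 * w <= hdist x y ->
  [disjoint supp x & supp y].
Proof.
rewrite /wt -/(supp x) -/(supp y) => wx wy.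
rewrite -setI_eq0 -cards_eq0; have := subset_leq_card (diff_sub x y).
have := subset_leq_card (subsetIl (supp x) (supp y)).
rewrite cardsU /hdist wx wy; set a := #|supp x :&: supp y|; set D := #|[set i | _]|; lia.
Qed.

Lemma code_le w (C : {set word q n}) : is_code (2 * w) w C -> #|C| * w <= n.
Proof.
case/and3P => sub _ far.
have wC : forall x, x \in C -> #|supp x| = w.
  by move=> x /(subsetP sub); rewrite inE => /eqP.
have dj : forall x y, x \in C -> y \in C -> x != y -> [disjoint supp x & supp y].
  move=> x y xC yC ne; apply: (far_disj (w := w)); rewrite /wt ?wC //.
  by move/forallP: far => /(_ x); rewrite xC /= => /forallP /(_ y); rewrite yC ne.
have -> : #|C| * w = \sum_(x in C) \sum_i (i \in supp x : nat).
  rewrite -sum_nat_const; apply: eq_bigr => x xC.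
  by rewrite -(wC x xC) -sum1_card big_mkcond.
rewrite exchange_big /=.
apply: (@leq_trans (\sum_(i < n) 1)); last by rewrite sum_nat_const card_ord muln1.
apply: leq_sum => i _.
rewrite -big_mkcondr /= sum1_card.
apply/card_le1_eqP => x y /andP[xC xi] /andP[yC yi]; apply/eqP/negP => ne.
have ne' : x != y by apply/negP => /eqP e; apply: ne; rewrite e.
by move: (disjointFr (dj x y xC yC ne') xi); rewrite yi.
Qed.

Definition zero : 'I_q := Ordinal (ltnW q1).
Definition one : 'I_q := Ordinal q1.
Definition ind (S : {set 'I_n}) : word q n := [ffun i => if i \in S then one else zero].

Lemma supp_ind S : supp (ind S) = S.
Proof. by apply/setP => i; rewrite !inE ffunE; case: (i \in S). Qed.

Lemma family_code w m (G : 'I_m -> word q n) : 0 < w -> 0 < m ->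
  (forall j, wt (G j) = w) ->
  (forall j j', j != j' -> [disjoint supp (G j) & supp (G j')]) ->
  is_code (2 * w) w [set G j | j : 'I_m] /\ #|[set G j | j : 'I_m]| = m.
Proof.
move=> w0 m0 wG djG.
have injG : injective G.
  move=> j j' e; apply/eqP; apply/negPn/negP => ne; have := djG j j' ne.
  rewrite e -setI_eq0 setIid => /eqP e0; move: (wG j'); rewrite /wt -/(supp _) e0.
  by rewrite cards0 => e1; move: w0; rewrite -e1.
have cardG : #|[set G j | j : 'I_m]| = m by rewrite card_imset // card_ord.
split => //; apply/and3P; split.
- by apply/subsetP => x /imsetP[j _ ->]; rewrite inE wG.
- by rewrite -card_gt0 cardG.
apply/forallP => x; apply/implyP => /imsetP[j _ ->].
apply/forallP => y; apply/implyP => /imsetP[j' _ ->].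
apply/implyP => ne; have ne' : j != j' by apply: contraNneq ne => ->.
rewrite hdist_disj ?djG //; move: (wG j) (wG j'); rewrite /wt -!/(supp _).
by move=> -> ->; rewrite addnn -mul2n.
Qed.

Lemma exists_code w : 0 < w -> w <= n ->
  exists C : {set word q n}, is_code (2 * w) w C /\ #|C| = n %/ w.
Proof.
move=> w0 wn.
have hm : n %/ w * w <= n by apply: leq_divM.
have [F [Fc Fd _]] := @baranyai_sec n w (n %/ w) (n %/ w) 'C(n, w) hm (mulnC _ _).
have t0 : 0 < 'C(n, w) by rewrite bin_gt0.
pose i0 : 'I_('C(n, w)) := Ordinal t0.
have m0 : 0 < n %/ w by rewrite divn_gt0.
have [cC cardC] := @family_code w (n %/ w) (fun j => ind (F i0 j)) w0 m0
  (fun j => ltac:(by rewrite /wt -/(supp _) supp_ind Fc))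
  (fun j j' ne => ltac:(by rewrite !supp_ind Fd)).
by exists [set ind (F i0 j) | j : 'I_(n %/ w)].
Qed.

Lemma Aq_eq w : 0 < w -> w <= n -> Aq q n (2 * w) w = n %/ w.
Proof.
move=> w0 wn; apply/eqP; rewrite eqn_leq; apply/andP; split.
  by apply/bigmax_leqP => C cC; rewrite leq_divRL //; exact: code_le.
have [C [cC <-]] := exists_code w0 wn.
exact: leq_bigmax_cond.
Qed.

End CodeS.

Section MainS.
Variables (q n : nat).
Hypothesis q1 : 1 < q.

Lemma card_supp (S : {set 'I_n}) :
  #|[set x : word q n | supp x == S]| = (q - 1) ^ #|S|.
Proof.
pose F (i : 'I_n) := if i \in S then [pred v : 'I_q | val v != 0]
                                 else [pred v : 'I_q | val v == 0].
have -> : [set x : word q n | supp x == S] =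
          [set x : {ffun 'I_n -> 'I_q} | [forall i, x i \in F i]].
  apply/setP => x; rewrite !inE; apply/eqP/forallP => [e i|h].
    rewrite /F -e inE; case: ifP => //; rewrite inE => /negbFE.
    by [].
  apply/setP => i; have := h i; rewrite /F !inE.
  by case: (i \in S); rewrite inE // => /eqP ->.
rewrite fam_card.
have c0 : #|[pred v : 'I_q | val v == 0]| = 1.
  rewrite -(card1 (zero q1)); apply: eq_card => v; rewrite !inE.
  by [].
have c1 : #|[pred v : 'I_q | val v != 0]| = q - 1.
  have := cardC [pred v : 'I_q | val v == 0]; rewrite c0 card_ord => e.
  have e' : #|[pred v : 'I_q | val v != 0]| = #|[predC [pred v : 'I_q | val v == 0]]|.
    by apply: eq_card => v; rewrite !inE.
  by rewrite e'; move: e; set a := #|[predC _]|; lia.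
rewrite (eq_bigr (fun i => if i \in S then q - 1 else 1)); last first.
  by move=> i _; rewrite /F; case: (i \in S).
by rewrite -big_mkcond /= prod_nat_const.
Qed.

Lemma card_H w : #|Hqnw q n w| = (q - 1) ^ w * 'C(n, w).
Proof.
rewrite -sum1_card (partition_big (@supp q n) [pred S : {set 'I_n} | #|S| == w]) /=;
  last by move=> x; rewrite inE.
rewrite (eq_bigr (fun _ => (q - 1) ^ w)); last first.
  move=> S /eqP cS; rewrite -cS -card_supp -sum1_card; apply: eq_bigl => x.
  rewrite !inE; case: (supp x =P S) => [e|]; rewrite ?andbT ?andbF //.
  by rewrite /wt -/(supp x) e eqxx.
rewrite sum_nat_const mulnC; congr (_ * _).
by rewrite -[in RHS](card_ord n) -card_draws; apply: eq_card => S; rewrite !inE.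
Qed.

Lemma card_pairs t m (P : 'I_t -> 'I_m -> bool) :
  #|[set p : 'I_t * 'I_m | P p.1 p.2]| = \sum_i #|[set j | P i j]|.
Proof.
under [RHS]eq_bigr do rewrite -(sum_bool_card (P _)).
rewrite pair_big /= -(sum_bool_card (fun p : 'I_t * 'I_m => P p.1 p.2)).
by apply: eq_bigl.
Qed.

Lemma toc_suff w : 0 < w -> w <= n -> (n %/ w) %| (q - 1) ^ w * 'C(n, w) ->
  TOC_exists q n (2 * w) w.
Proof.
move=> w0 wn dv.
set m := n %/ w; set lam := (q - 1) ^ w; set t := lam * 'C(n, w) %/ m.
have m0 : 0 < m by rewrite divn_gt0.
have ht : t * m = lam * 'C(n, w) by apply: divnK.
have hm : m * w <= n by apply: leq_divM.
have [F [Fc Fd Fcnt]] := @baranyai_sec n w m lam t hm ht.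
have lam0 : 0 < lam by rewrite expn_gt0 subn_gt0 q1.
have t0 : 0 < t.
  have : 0 < t * m by rewrite ht muln_gt0 lam0 bin_gt0.
  by rewrite muln_gt0 => /andP[].
pose p0 : 'I_t * 'I_m := (Ordinal t0, Ordinal m0).
pose x0 : word q n := ind q1 set0.
pose W (S : {set 'I_n}) := enum [set x : word q n | supp x == S].
pose PS (S : {set 'I_n}) := enum [set p : 'I_t * 'I_m | F p.1 p.2 == S].
pose g (p : 'I_t * 'I_m) := nth x0 (W (F p.1 p.2)) (index p (PS (F p.1 p.2))).
have sizeW : forall S : {set 'I_n}, #|S| = w -> size (W S) = lam.
  by move=> S cS; rewrite /W -cardE card_supp cS.
have sizeP : forall S : {set 'I_n}, #|S| = w -> size (PS S) = lam.
  move=> S cS; rewrite /PS -cardE (card_pairs (fun i j => F i j == S)).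
  exact: Fcnt.
have inP : forall p, p \in PS (F p.1 p.2) by move=> p; rewrite mem_enum inE.
have idx : forall p, index p (PS (F p.1 p.2)) < lam.
  by move=> p; rewrite -(sizeP _ (Fc p.1 p.2)) index_mem.
have gW : forall p, g p \in W (F p.1 p.2).
  by move=> p; apply: mem_nth; rewrite sizeW ?Fc ?idx.
have suppg : forall p, supp (g p) = F p.1 p.2.
  by move=> p; have := gW p; rewrite mem_enum inE => /eqP.
have ginj : injective g.
  move=> p p' e.
  have eS : F p.1 p.2 = F p'.1 p'.2 by rewrite -!suppg e.
  have ei : index p (PS (F p.1 p.2)) = index p' (PS (F p.1 p.2)).
    apply/eqP; rewrite -(@nth_uniq _ x0 (W (F p.1 p.2)) _ _ _ _ (enum_uniq _)).
    - by move: e; rewrite /g -eS => ->.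
    - by rewrite sizeW ?Fc ?idx.
    - by rewrite sizeW ?Fc // eS idx.
  have p'P : p' \in PS (F p.1 p.2) by rewrite eS inP.
  by rewrite -(nth_index p (inP p)) ei (nth_index p p'P).
have gsurj : forall x, x \in Hqnw q n w -> exists p, g p = x.
  move=> x; rewrite inE => /eqP wx; set S := supp x.
  have cS : #|S| = w by [].
  have xW : x \in W S by rewrite mem_enum inE.
  set k := index x (W S).
  have kl : k < size (PS S) by rewrite sizeP // -(sizeW S cS) index_mem.
  pose p := nth p0 (PS S) k.
  have pP : p \in PS S := mem_nth p0 kl.
  have Fp : F p.1 p.2 = S by move: pP; rewrite mem_enum inE => /eqP.
  exists p; rewrite /g Fp (index_uniq p0 kl (enum_uniq _)).
  exact: nth_index.
pose B i := [set g (i, j) | j : 'I_m].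
have Bcode : forall i, is_code (2 * w) w (B i) /\ #|B i| = m.
  move=> i; apply: (@family_code q n w m (fun j => g (i, j)) w0 m0).
    by move=> j; rewrite /wt -/(supp _) suppg Fc.
  by move=> j j' ne; rewrite !suppg; apply: Fd.
exists [set B i | i : 'I_t]; apply/andP; split.
  apply/and3P; split.
  - apply/eqP/setP => x; apply/bigcupP/idP => [[C /imsetP[i _ ->] /imsetP[j _ ->]] | xH].
      by rewrite inE /wt -/(supp _) suppg Fc.
    have [p <-] := gsurj x xH; exists (B p.1); first exact: imset_f.
    by apply/imsetP; exists p.2 => //; case: p.
  - apply/trivIsetP => A B' /imsetP[i _ ->] /imsetP[i' _ ->] ne.
    rewrite -setI_eq0; apply/eqP/setP => y; rewrite !inE; apply/negbTE/negP.
    move=> /andP[/imsetP[j _ ->] /imsetP[j' _ e]].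
    have := ginj _ _ e => -[ei _]; move: ne; rewrite ei eqxx.
    by [].
  - apply/negP => /imsetP[i _ e]; have := (Bcode i).2; rewrite -e cards0 => m0'.
    by move: (m0); rewrite -m0'.
apply/forallP => C; apply/implyP => /imsetP[i _ ->].
by rewrite /optimal_code (Bcode i).1 (Bcode i).2 Aq_eq // eqxx.
Qed.

Lemma toc_nec w : 0 < w -> w <= n -> TOC_exists q n (2 * w) w ->
  (n %/ w) %| (q - 1) ^ w * 'C(n, w).
Proof.
move=> w0 wn [P /andP[part /forallP opt]].
rewrite -card_H (card_partition part).
rewrite (eq_bigr (fun _ => n %/ w)) ?sum_nat_const ?dvdn_mull //.
move=> C CP; have := opt C; rewrite CP /= /optimal_code => /andP[_ /eqP ->].
exact: Aq_eq.
Qed.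

End MainS.

Theorem theorem3p7 (q n w : nat) :
  2 <= q -> 0 < w -> w <= n ->
  (TOC_exists q n (2 * w) w <-> (n %/ w) %| (q - 1) ^ w * 'C(n, w)).
Proof.
move=> q2 w0 wn; split; [exact: toc_nec | exact: toc_suff].
Qed.
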